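(* Let $V$ be a finite dimensional real vector space and let $\Delta \subset V \setminus \{0\}$ satisfy $\Delta = -\Delta$. Then every strongly parabolic subset of $\Delta$ is a parabolic subset of $\Delta$.
   Context: A subset $P \subset \Delta$ is called parabolic if (1) $\Delta = P \cup -P$, and (2) whenever $\alpha, \beta \in P$ and $\alpha+\beta \in \Delta$, then $\alpha+\beta \in P$. A partition $\Delta = \Delta^- \sqcup \Delta^0 \sqcup \Delta^+$ is called a triangular decomposition of $\Delta$ if there is a linear function $\lambda \in V^*$ with $\Delta^0 = \Delta \cap \ker \lambda$ and $\Delta^{\pm} = \{\alpha \in \Delta \mid \lambda(\alpha) \gtrless 0\}$. A subset $P \subset \Delta$ is called strongly parabolic (defined recursively) if $P = \Delta$, or $P = P^0 \sqcup \Delta^+$ for some triangular decomposition $\Delta = \Delta^- \sqcup \Delta^0 \sqcup \Delta^+$ (with linear function $\lambda$) and some subset $P^0 \subset \Delta^0$ that is strongly parabolic as a subset of $\Delta^0$ regarded inside the vector space $\ker \lambda$. *)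

(* Defs.v *)
From HB Require Import structures.
From mathcomp Require Import all_boot all_order all_algebra.
From mathcomp Require Import reals.
Set Implicit Arguments. Unset Strict Implicit. Unset Printing Implicit Defensive.
Import Order.TTheory GRing.Theory Num.Theory.
Local Open Scope ring_scope.

Section Parabolic.
Variables (R : realType) (V : vectType R).

Definition parabolic (D P : V -> Prop) : Prop :=
  (forall x, D x <-> (P x \/ P (- x))) /\
  (forall a b, P a -> P b -> D (a + b) -> P (a + b)).

(* A triangular
   decomposition of D is given by a linear form l : V -> R; its zero part is
   D^0 = D n ker l and its positive part is D^+ = {a in D | l a > 0}.
   The recursion on D^0 (regarded inside ker l) uses linear forms on V; every
   linear form on the subspace ker l is the restriction of one on V, and they
   induce the same decompositions of D^0. *)
Inductive strongly_parabolic : (V -> Prop) -> (V -> Prop) -> Prop :=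
| sp_full (D P : V -> Prop) :
    (forall x, P x <-> D x) -> strongly_parabolic D P
| sp_step (D P P0 : V -> Prop) (l : {linear V -> R^o}) :
    strongly_parabolic (fun x => D x /\ l x = 0) P0 ->
    (forall x, P x <-> (P0 x \/ (D x /\ 0 < l x))) ->
    strongly_parabolic D P.

End Parabolic.

(* Main.v *)
Require Import Defs.
From HB Require Import structures.
From mathcomp Require Import all_boot all_order all_algebra.
From mathcomp Require Import reals.
Import Order.TTheory GRing.Theory Num.Theory.
Local Open Scope ring_scope.

Theorem proposition1p2 (R : realType) (V : vectType R) (D : V -> Prop)
  (hD0 : forall x, D x -> x != 0)
  (hDsym : forall x, D x <-> D (- x))
  (P : V -> Prop) :
  strongly_parabolic D P -> parabolic D P.
Proof.
move=> H; clear hD0; move: hDsym; elim: H => {D P}.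
- move=> D P HP hs; split.
    move=> x; split; first by move/HP; left.
    by case=> /HP // h; apply/hs.
  by move=> a b _ _ /HP.
- move=> D P P0 l _ IH HP hs.
  have hs0 : forall x, (D x /\ l x = 0) <-> (D (-x) /\ l (-x) = 0).
    move=> x; rewrite linearN /=; split.
      by case=> h ->; rewrite oppr0; split => //; exact: (proj1 (hs x) h).
    case=> h /eqP; rewrite oppr_eq0 => /eqP ->; split => //.
    exact: (proj2 (hs x) h).
  have [IH1 IH2] := IH hs0.
  have P0D : forall x, P0 x -> D x /\ l x = 0.
    by move=> x Px; apply/IH1; left.
  split.
    move=> x; split.
      move=> Dx; case: (ltgtP (l x) 0) => hl.
      + right; apply/HP; right; split; first exact: (proj1 (hs x) Dx).
        by rewrite linearN /= oppr_gt0.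
      + by left; apply/HP; right.
      + have : D x /\ l x = 0 by [].
        by move/IH1 => [h|h]; [left|right]; apply/HP; left.
    case=> [/HP [/P0D [] //|[] //]|].
    by case/HP => [/P0D [] h _|[] h _]; exact: (proj2 (hs x) h).
  have Pge : forall x, P x -> 0 <= l x.
    by move=> x /HP [/P0D [] _ ->|[] _ /ltW].
  move=> a b Pa Pb Dab; apply/HP.
  have ha := Pge _ Pa; have hb := Pge _ Pb.
  have : 0 <= l (a + b) by rewrite linearD /= addr_ge0.
  rewrite le_eqVlt => /orP [/eqP h|h]; last by right.
  left; apply: IH2; last by split.
  - move: Pa => /HP [//|[] _ h']; exfalso.
    move: h; rewrite linearD /= => /esym/eqP; rewrite paddr_eq0 // => /andP [/eqP e _].
    by move: h'; rewrite e ltxx.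
  - move: Pb => /HP [//|[] _ h']; exfalso.
    move: h; rewrite linearD /= => /esym/eqP; rewrite paddr_eq0 // => /andP [_ /eqP e].
    by move: h'; rewrite e ltxx.
Qed.
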